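(* For every cycle $C$ on at least $4$ vertices, $4\le\pi_T(C)\le 6$.
   Context: A sequence is nonrepetitive if no block of consecutive terms has the form $r_1\dots r_nr_1\dots r_n$ with $n\ge1$. A (strong) total Thue colouring of a graph $G$ is a colouring of $V(G)\cup E(G)$ such that for every path $v_1,e_1,v_2,\dots,e_{k-1},v_k$ in $G$ the sequence of colours of $v_1,e_1,\dots,v_k$ is nonrepetitive, the sequence of colours of $v_1,\dots,v_k$ is nonrepetitive, and the sequence of colours of $e_1,\dots,e_{k-1}$ is nonrepetitive. $\pi_T(G)$ is the minimum number of colours in a total Thue colouring of $G$. *)

(* Defs.v *)
From mathcomp Require Import all_boot.
Set Implicit Arguments. Unset Strict Implicit. Unset Printing Implicit Defensive.

Definition nonrepetitive (A : eqType) (s : seq A) : Prop :=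
  forall a r b : seq A, r <> [::] -> s <> a ++ r ++ r ++ b.

(* A simple graph: vertex finType T with symmetric irreflexive adjacency e.
   A path v_1,...,v_k (k >= 1) is a sequence of pairwise distinct vertices
   with consecutive vertices adjacent. *)
Definition is_graph_path (T : finType) (e : rel T) (p : seq T) : bool :=
  [&& p != [::], sorted e p & uniq p].

Fixpoint edge_colours (T : finType) (C : Type) (ec : {set T} -> C) (p : seq T)
  : seq C :=
  match p with
  | x :: ((y :: _) as s) => ec [set x; y] :: edge_colours ec s
  | _ => [::]
  end.

Fixpoint total_colours (T : finType) (C : Type) (vc : T -> C)
  (ec : {set T} -> C) (p : seq T) : seq C :=
  match p with
  | [::] => [::]
  | [:: x] => [:: vc x]
  | x :: ((y :: _) as s) => vc x :: ec [set x; y] :: total_colours vc ec s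
  end.

Definition total_thue_colouring (T : finType) (e : rel T) (k : nat)
  (vc : T -> 'I_k) (ec : {set T} -> 'I_k) : Prop :=
  forall p : seq T, is_graph_path e p ->
    [/\ nonrepetitive (total_colours vc ec p),
        nonrepetitive (map vc p) &
        nonrepetitive (edge_colours ec p)].

Definition total_thue_colourable (T : finType) (e : rel T) (k : nat) : Prop :=
  exists (vc : T -> 'I_k) (ec : {set T} -> 'I_k), @total_thue_colouring T e k vc ec.

Definition cycle_adj (n : nat) : rel 'I_n :=
  fun i j => (j == (i.+1 %% n) :> nat) || (i == (j.+1 %% n) :> nat).

(* Main.v *)
Require Import Defs.
From mathcomp Require Import all_boot zify.
From Stdlib Require Import Classical.
Set Implicit Arguments. Unset Strict Implicit. Unset Printing Implicit Defensive.

Fixpoint tmf (f n : nat) : bool :=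
  if f is f'.+1 then odd n (+) tmf f' n./2 else false.

Lemma tmf0 f : tmf f 0 = false.
Proof. by elim: f => //= f ->. Qed.

Lemma tmf_eq f g n : n < f -> n < g -> tmf f n = tmf g n.
Proof.
elim: f g n => [|f IH] [|g] n //= hf hg.
case: n hf hg => [|n] hf hg; first by rewrite !tmf0.
congr (_ (+) _); apply: IH; lia.
Qed.

Definition tm n := tmf n.+1 n.

Lemma tmE n : tm n = odd n (+) tm n./2.
Proof.
rewrite {1}/tm /=; congr (_ (+) _).
case: n => [|n]; first by rewrite /tm !tmf0.
apply: tmf_eq; lia.
Qed.

Lemma tm_even k : tm (2 * k) = tm k.
Proof. rewrite tmE mul2n odd_double doubleK. by []. Qed.

Lemma tm_odd k : tm (2 * k + 1) = ~~ tm k.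
Proof.
rewrite tmE addn1 mul2n /= odd_double /=. congr (~~ tm _). lia.
Qed.

Lemma parity p : exists p', p = 2 * p' \/ p = 2 * p' + 1.
Proof.
exists p./2; have := odd_double_half p; case: (odd p) => /= <-; [right|left]; lia.
Qed.

Lemma no_cube k : tm k = tm k.+1 -> tm k.+1 = tm k.+2 -> False.
Proof.
have [j [->|->]] := parity k.
- rewrite -[(2*j).+1]addn1 tm_even tm_odd. by case: (tm j) => //=.
- have -> : (2 * j + 1).+2 = 2 * j.+1 + 1 by lia.
  have -> : (2 * j + 1).+1 = 2 * j.+1 by lia.
  rewrite tm_even !tm_odd. by case: (tm j); case: (tm j.+1) => //=.
Qed.

Lemma even_alt u : tm (2 * u) != tm (2 * u).+1.
Proof. have -> : (2*u).+1 = 2*u+1 by lia. rewrite tm_odd tm_even. by case: (tm u). Qed.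

Lemma alt5 i : (forall d, d < 5 -> tm (i+d) != tm (i+d).+1) -> False.
Proof.
move=> H.
have [j [ei|ei]] := parity i; subst i.
- have H1 := H 1 erefl; have H3 := H 3 erefl.
  have e1 : (2 * j + 1) = 2 * j + 1 by [].
  have e2 : (2 * j + 1).+1 = 2 * j.+1 by lia.
  have e3 : (2 * j + 3) = 2 * j.+1 + 1 by lia.
  have e4 : (2 * j + 3).+1 = 2 * j.+2 by lia.
  move: H1 H3; rewrite e2 e4 e3 !tm_odd !tm_even => H1 H3.
  apply: (@no_cube j); [move: H1 | move: H3]; by case: (tm j); case: (tm j.+1); case: (tm j.+2).
- have H1 := H 2 erefl; have H3 := H 4 erefl.
  have e1 : (2 * j + 1 + 2) = 2 * j.+1 + 1 by lia.
  have e2 : (2 * j + 1 + 2).+1 = 2 * j.+2 by lia.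
  have e3 : (2 * j + 1 + 4) = 2 * j.+2 + 1 by lia.
  have e4 : (2 * j + 1 + 4).+1 = 2 * j.+3 by lia.
  move: H1 H3; rewrite e2 e1 e4 e3 !tm_odd !tm_even => H1 H3.
  apply: (@no_cube j.+1); [move: H1 | move: H3]; by case: (tm j.+1); case: (tm j.+2); case: (tm j.+3).
Qed.

Lemma ovf m : 0 < m -> forall p, (forall j, j <= m -> tm (p+j) = tm (p+m+j)) -> False.
Proof.
elim/ltn_ind: m => m IH m0 p H.
have [m' [em|em]] := parity m.
-
  have m'0 : 0 < m' by lia.
  have [p' [ep|ep]] := parity p.
  + apply: (IH m' _ m'0 p'); first by lia.
    move=> j hj; have := H (2 * j) ltac:(lia).
    have -> : p + 2 * j = 2 * (p' + j) by lia.
    have -> : p + m + 2 * j = 2 * (p' + m' + j) by lia.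
    by rewrite !tm_even.
  + apply: (IH m' _ m'0 p'); first by lia.
    move=> j hj; have := H (2 * j) ltac:(lia).
    have -> : p + 2 * j = 2 * (p' + j) + 1 by lia.
    have -> : p + m + 2 * j = 2 * (p' + m' + j) + 1 by lia.
    rewrite !tm_odd. by case: (tm _); case: (tm _).
-
  case: m' em => [|m''] em.
  + subst m; apply: (@no_cube p).
    * transitivity (tm (p+0)); first by rewrite addn0.
      rewrite (H 0 erefl); congr tm; lia.
    * transitivity (tm (p+1)); first by rewrite addn1.
      rewrite (H 1 erefl); congr tm; lia.
  + have A : forall d, d < m -> tm (p+d) != tm (p+d).+1.
      move=> d dm; have [w [ew|ew]] := parity (p+d).
      * by rewrite ew even_alt.
      * have h1 := H d ltac:(lia); have h2 := H d.+1 ltac:(lia).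
        rewrite h1 -addnS h2 addnS.
        have -> : p + m + d = 2 * (w + m'' + 2) by lia.
        exact: even_alt.
    apply: (alt5 (i:=p)) => d d5.
    case: (ltnP d m) => dm; first exact: A.
    have h1 := H (d - m) ltac:(lia); have h2 := H (d - m).+1 ltac:(lia).
    have -> : p + d = p + m + (d - m) by lia.
    rewrite -h1 -addnS -h2 addnS; apply: A; lia.
Qed.

Definition sw i : nat := (tm i.+1 : nat) + 1 - (tm i : nat).

Lemma sw_lt3 i : sw i < 3.
Proof. by rewrite /sw; case: (tm _); case: (tm _). Qed.

Lemma bstep (b0 b1 c0 c1 : bool) : (b1:nat) + 1 - b0 = (c1:nat) + 1 - c0 ->
  (b0 = c0 -> b1 = c1) /\ (b0 <> c0 -> b1 = b0 /\ c1 = c0).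
Proof. by case: b0; case: b1; case: c0; case: c1. Qed.

Lemma sw_sqfree r m : 0 < m -> exists j, j < m /\ sw (r+j) <> sw (r+m+j).
Proof.
move=> m0; apply: NNPP => Hn.
have H : forall j, j < m -> sw (r+j) = sw (r+m+j).
  move=> j hj; apply: NNPP => ne; apply: Hn; by exists j.
have St : forall j, j < m -> (tm (r+j) = tm (r+m+j) -> tm (r+j).+1 = tm (r+m+j).+1) /\
   (tm (r+j) <> tm (r+m+j) -> tm (r+j).+1 = tm (r+j) /\ tm (r+m+j).+1 = tm (r+m+j)).
  move=> j hj; have := H j hj; rewrite /sw; exact: bstep.
case: (boolP (tm r == tm (r+m))) => /eqP e.
- apply: (ovf m0 (p:=r)); elim=> [|j IHj] hj; first by rewrite !addn0.
  rewrite !addnS; by apply: (St j hj).1; apply: IHj; lia.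
- have : forall j, j <= m -> tm (r+j) = tm r /\ tm (r+m+j) = tm (r+m).
    elim=> [|j IHj] hj; first by rewrite !addn0.
    have [h1 h2] := IHj ltac:(lia). rewrite !addnS.
    have [h3 h4] := (St j ltac:(lia)).2 ltac:(by rewrite h1 h2).
    by rewrite h3 h4 h1 h2.
  move=> /(_ m (leqnn m)) [h1 _]; by apply: e.
Qed.
Lemma cyc_sqfree (g u : nat -> nat) P :
  0 < P ->
  (forall k, k < P.-1 -> g k = u k) ->
  (forall k, k < P.-1 -> g P.-1 <> g k) ->
  (forall r m, 0 < m -> exists j, j < m /\ u (r+j) <> u (r+m+j)) ->
  forall q m, 0 < m -> m.*2 <= P ->
    exists j, j < m /\ g ((q+j) %% P) <> g ((q+m+j) %% P).
Proof.
move=> P0 hu hm hsf q m m0 m2.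
have rP : q %% P < P by rewrite ltn_pmod.
have mq : forall x, (q + x) %% P = (q %% P + x) %% P by move=> x; rewrite modnDml.
case: (leqP ((q %% P) + m.*2) P.-1) => hr.
- have [j [jm hj]] := hsf (q %% P) m m0.
  exists j; split => //.
  rewrite -addnA (mq j) (mq (m+j)) (@modn_small (q %% P + j)); last lia.
  rewrite (@modn_small (q %% P + (m+j))); last lia.
  rewrite !hu; try lia. by rewrite addnA.
- set k := P.-1 - q %% P.
  have hk : (q + k) %% P = P.-1 by rewrite (mq k) (@modn_small (q %% P + k)); lia.
  case: (ltnP k m) => km.
  + exists k; split => //.
    have -> : (q + m + k) %% P = m.-1.
      rewrite -addnA (mq (m+k)).
      have -> : q %% P + (m + k) = m.-1 + P by lia.
      rewrite modnDr modn_small //; lia.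
    rewrite hk; apply: hm; lia.
  + exists (k - m); split; first lia.
    have -> : (q + m + (k - m)) = q + k by lia.
    rewrite hk (mq (k-m)) (@modn_small (q %% P + (k - m))); last lia.
    move=> e; apply: (hm (q %% P + (k - m))); first lia. by rewrite e.
Qed.

Definition Xc N := 3 + (sw N.-1 + 1) %% 3.
Definition Yc := (sw 0 + 1) %% 3.
Definition xw N i := if i < N then sw i else Xc N.
Definition ew N i := if i < N then 3 + sw i else Yc.
Definition Zt N j := let i := (j./2) %% N.+1 in if odd j then ew N i else xw N i.

Lemma ZtE0 N w : Zt N (2*w) = xw N (w %% N.+1).
Proof. rewrite /Zt oddM /=. by have -> : (2*w)./2 = w by lia. Qed.

Lemma ZtE1 N w : Zt N (2*w+1) = ew N (w %% N.+1).
Proof. rewrite /Zt oddD oddM /=. by have -> : (2*w+1)./2 = w by lia. Qed.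

Lemma xw_lt6 N i : xw N i < 6.
Proof. rewrite /xw /Xc; have := sw_lt3 i; case: ifP => _; lia. Qed.
Lemma ew_lt6 N i : ew N i < 6.
Proof. rewrite /ew /Yc; have := sw_lt3 i; case: ifP => _; lia. Qed.

Lemma Zt_class N k : (Zt N k < 3) = (odd k == (k./2 %% N.+1 == N)).
Proof.
rewrite /Zt /xw /ew /Xc /Yc.
set i := k./2 %% N.+1.
have h : i < N.+1 by rewrite ltn_pmod.
have := sw_lt3 i.
case: (odd k); case: (ltngtP i N) => e s3 //=; try lia.
Qed.

Lemma bad_ge N k : (k./2) %% N.+1 = N -> N.*2 <= k %% (N.+1).*2.
Proof.
have e := divn_eq k (N.+1).*2.
set a := k %/ _ in e; set r := k %% _ in e *.
have rlt : r < (N.+1).*2 by rewrite /r ltn_pmod.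
have -> : k./2 = a * N.+1 + r./2 by lia.
rewrite modnMDl modn_small; lia.
Qed.

Lemma bad_close N k1 k2 : (k1./2) %% N.+1 = N -> (k2./2) %% N.+1 = N ->
  k1 <= k2 -> k2 <= k1 + N.*2 -> k2 <= k1 + 1.
Proof.
move=> /bad_ge b1 /bad_ge b2 h12 h21.
have e1 := divn_eq k1 (N.+1).*2; have e2 := divn_eq k2 (N.+1).*2.
have r1 : k1 %% (N.+1).*2 < (N.+1).*2 by rewrite ltn_pmod.
have r2 : k2 %% (N.+1).*2 < (N.+1).*2 by rewrite ltn_pmod.
set a1 := k1 %/ _ in e1; set a2 := k2 %/ _ in e2.
case: (leqP a2 a1) => ha.
- have : a2 * (N.+1).*2 <= a1 * (N.+1).*2 by rewrite leq_mul2r ha orbT.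
  lia.
- have : (a1.+1) * (N.+1).*2 <= a2 * (N.+1).*2 by rewrite leq_mul2r ha orbT.
  lia.
Qed.

Lemma Zt_adj N q : 3 <= N -> Zt N q <> Zt N q.+1.
Proof.
move=> N3.
have [w [->|->]] := parity q.
- have -> : (2*w).+1 = 2*w+1 by lia.
  rewrite ZtE0 ZtE1 /xw /ew /Xc /Yc.
  have h : w %% N.+1 < N.+1 by rewrite ltn_pmod.
  have := sw_lt3 (w %% N.+1); case: ifP => _; lia.
- have -> : (2 * w + 1).+1 = 2 * w.+1 by lia.
  rewrite ZtE0 ZtE1.
  have h : w %% N.+1 < N.+1 by rewrite ltn_pmod.
  have -> : w.+1 %% N.+1 = (w %% N.+1).+1 %% N.+1 by rewrite -addn1 -modnDml addn1.
  set i := w %% N.+1 in h *.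
  have := sw_lt3 i; have := sw_lt3 0; have := sw_lt3 N.-1.
  case: (ltngtP i.+1 N.+1) h => // h _.
  + rewrite modn_small // /xw /ew.
    case: (ltngtP i.+1 N) => hi; [|lia|].
    * have := sw_lt3 i.+1; lia.
    * rewrite /Xc. have -> : N.-1 = i by lia. lia.
  + rewrite h modnn /xw /ew /Yc /=. have -> : i < N = false by lia. rewrite ifT; last lia. lia.
Qed.

Lemma bad_near N x y : (x./2) %% N.+1 = N -> (y./2) %% N.+1 = N ->
  x <= y + N.*2 -> y <= x + N.*2 -> x <= y + 1 /\ y <= x + 1.
Proof.
move=> bx bY h1 h2; case: (leqP x y) => h.
- have := bad_close bx bY h h2; lia.
- have := bad_close bY bx (ltnW h) h1; lia.
Qed.

Lemma sw3_sqfree r m : 0 < m -> exists j, j < m /\ 3 + sw (r+j) <> 3 + sw (r+m+j).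
Proof. move=> m0; have [j [jm hj]] := sw_sqfree r m0; exists j; split => //; lia. Qed.

Lemma Zt_sqfree N : 3 <= N -> forall q m, 0 < m -> m.*2 <= N.*2.+1 ->
  exists j, j < m /\ Zt N (q+j) <> Zt N (q+m+j).
Proof.
move=> N3 q m m0 m2; apply: NNPP => Hn.
have H : forall j, j < m -> Zt N (q+j) = Zt N (q+m+j).
  move=> j hj; apply: NNPP => ne; apply: Hn; by exists j.
have [m' [em|em]] := parity m.
- have m'0 : 0 < m' by lia.
  have [w [eq|eq]] := parity q.
  + have [|||j [jm hj]] := @cyc_sqfree (xw N) sw N.+1 erefl _ _ sw_sqfree w m' m'0.
    * by move=> k hk; rewrite /xw ifT.
    * move=> k hk; rewrite /xw /= ifF ?ifT //; last lia. rewrite /Xc; have := sw_lt3 k; lia.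
    * lia.
    * apply: hj; have := H (2 * j) ltac:(lia).
      have -> : q + 2 * j = 2 * (w + j) by lia.
      have -> : q + m + 2 * j = 2 * (w + m' + j) by lia.
      by rewrite !ZtE0.
  + have [|||j [jm hj]] := @cyc_sqfree (ew N) (fun i => 3 + sw i) N.+1 erefl _ _ sw3_sqfree w m' m'0.
    * by move=> k hk; rewrite /ew ifT.
    * move=> k hk; rewrite /ew /= ifF ?ifT //; last lia. rewrite /Yc; have := sw_lt3 0; lia.
    * apply: hj; have := H (2 * j) ltac:(lia).
      have -> : q + 2 * j = 2 * (w + j) + 1 by lia.
      have -> : q + m + 2 * j = 2 * (w + m' + j) + 1 by lia.
      by rewrite !ZtE1.
- case: m' em => [|m''] em.
  + apply: (@Zt_adj N q N3). have := H 0 ltac:(lia).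
    rewrite addn0; move=> ->; congr Zt; lia.
  + have B : forall j, j < m -> ((q+j)./2 %% N.+1 == N) || ((q+m+j)./2 %% N.+1 == N).
      move=> j hj; have := H j hj => e.
      have := Zt_class N (q+j); have := Zt_class N (q+m+j).
      rewrite e => ->.
      have -> : odd (q + m + j) = ~~ odd (q + j).
        have -> : q + m + j = (q + j) + 2 * m''.+1 + 1 by lia.
        rewrite !oddD oddM /=. by case: (odd q); case: (odd j).
      set b1 := ((q+j)./2 %% N.+1 == N); set b2 := ((q+m+j)./2 %% N.+1 == N).
      by case: (odd (q+j)); case: b1; case: b2.
    have B0 := B 0 ltac:(lia); have B1 := B 1 ltac:(lia); have B2 := B 2 ltac:(lia).
    have W : forall x y, x <= y + N.*2 -> y <= x + N.*2 ->
        (x./2) %% N.+1 == N -> (y./2) %% N.+1 == N -> x <= y + 1 /\ y <= x + 1.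
      by move=> x y h1 h2 /eqP bx /eqP bY; exact: (bad_near bx bY h1 h2).
    move: B0 B1 B2 => /orP [B0|B0] /orP [B1|B1] /orP [B2|B2];
    [ have := W _ _ _ _ B0 B2
    | have := W _ _ _ _ B0 B2
    | have := W _ _ _ _ B0 B1
    | have := W _ _ _ _ B0 B1
    | have := W _ _ _ _ B1 B0
    | have := W _ _ _ _ B2 B0
    | have := W _ _ _ _ B1 B2
    | have := W _ _ _ _ B0 B2 ]; lia.
Qed.

Lemma Zt_lt6 N j : Zt N j < 6.
Proof. rewrite /Zt; case: (odd j); [exact: ew_lt6 | exact: xw_lt6]. Qed.

Lemma inord_inj6 x y : x < 6 -> y < 6 -> x <> y -> (inord x : 'I_6) <> inord y.
Proof. move=> hx hy ne e; apply: ne; have := congr1 (@nat_of_ord 6) e; by rewrite !inordK. Qed.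

Lemma nonrep_nth (A : eqType) (s : seq A) x0 :
  (forall q m, 0 < m -> q + m.*2 <= size s ->
     exists j, j < m /\ nth x0 s (q+j) <> nth x0 s (q+m+j)) -> nonrepetitive s.
Proof.
move=> H a r b rn es.
have m0 : 0 < size r by rewrite lt0n size_eq0; apply/eqP.
have [|j [jm hj]] := H (size a) (size r) m0.
  by rewrite es !size_cat; lia.
have nc : forall (s1 s2 : seq A) k, nth x0 (s1 ++ s2) (size s1 + k) = nth x0 s2 k.
  by move=> s1 s2 k; rewrite nth_cat ifF ?addKn //; lia.
apply: hj; rewrite es nc -addnA nc nc.
by rewrite nth_cat ifT // nth_cat ifT.
Qed.

Definition vcol N (i : 'I_N.+1) : 'I_6 := inord (xw N i).
Definition ecol N (E : {set 'I_N.+1}) : 'I_6 :=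
  if [pick i : 'I_N.+1 | (i < N) && (E == [set i; inord i.+1])] is Some i
  then inord (ew N i) else inord Yc.
Arguments vcol : clear implicits.
Arguments ecol : clear implicits.

Lemma ec_edge N (i : nat) : 3 <= N -> i < N.+1 ->
  ecol N [set inord i; inord ((i+1) %% N.+1)] = inord (ew N i).
Proof.
move=> N3 hi; rewrite /ecol.
case: (ltngtP i N) => hiN; [|lia|].
- rewrite modn_small; last lia.
  case: pickP => [j /andP [jN /eqP E]|].
  + have h1 : (inord i : 'I_N.+1) \in [set j; inord j.+1] by rewrite -E set21.
    have h2 : j \in [set (inord i : 'I_N.+1); inord (i+1)] by rewrite E set21.
    move: h1 h2; rewrite !in_set2 -!val_eqE /= !inordK; try lia.
    move=> h1 h2; have e : (j : nat) = i by move: h1 h2 => /orP [/eqP|/eqP] /= ? /orP [/eqP|/eqP]; lia.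
    by rewrite e.
  + move=> /(_ (inord i)); rewrite inordK; last lia.
    by rewrite hiN addn1 eqxx.
- rewrite hiN.
  have -> : (N + 1) %% N.+1 = 0 by rewrite addn1 modnn.
  case: pickP => [j /andP [jN /eqP E]|_].
  + have h1 : (inord N : 'I_N.+1) \in [set j; inord j.+1] by rewrite -E set21.
    have h2 : (inord 0 : 'I_N.+1) \in [set j; inord j.+1] by rewrite -E set22.
    move: h1 h2; rewrite !in_set2 -!val_eqE /= !inordK; try lia.
  + by rewrite /ew ltnn.
Qed.

Fixpoint arcf N a L : seq 'I_N.+1 :=
  inord (a %% N.+1) :: (if L is L'.+1 then arcf N a.+1 L' else [::]).

Lemma arc_size N a L : size (arcf N a L) = L.+1.
Proof. by elim: L a => [|L IH] a //=; rewrite IH. Qed.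

Lemma arc_nth N a L k x0 : k <= L -> nth x0 (arcf N a L) k = inord ((a + k) %% N.+1).
Proof.
elim: L a k => [|L IH] a [|k] //= hk; try by rewrite addn0.
rewrite IH //; by rewrite addSnnS.
Qed.

Lemma arc_mem N a L k : k <= L -> (inord ((a + k) %% N.+1) : 'I_N.+1) \in arcf N a L.
Proof. move=> hk; rewrite -(arc_nth a ord0 hk); apply: mem_nth; rewrite arc_size; lia. Qed.

Lemma arc_rcons N a L : arcf N a L.+1 = rcons (arcf N a L) (inord ((a + L.+1) %% N.+1)).
Proof.
elim: L a => [|L IH] a; first by rewrite /= addn1.
have -> : arcf N a L.+2 = inord (a %% N.+1) :: arcf N a.+1 L.+1 by [].
by rewrite IH addSnnS.
Qed.

Lemma modS N a : a.+1 %% N.+1 = ((a %% N.+1) + 1) %% N.+1.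
Proof. by rewrite modnDml addn1. Qed.

Lemma arc_mod N a b L : a %% N.+1 = b %% N.+1 -> arcf N a L = arcf N b L.
Proof.
elim: L a b => [|L IH] a b e /=; first by rewrite e.
by rewrite e (IH a.+1 b.+1) // !modS e.
Qed.

Lemma edge_arc_size N a L : size (edge_colours (ecol N) (arcf N a L)) = L.
Proof.
elim: L a => [|L IH] a //=.
by case: L IH => [|L] IH //=; rewrite -[X in _ = X.+1](IH a.+1).
Qed.

Lemma edge_arc N a L k : 3 <= N -> k < L ->
  nth ord0 (edge_colours (ecol N) (arcf N a L)) k = inord (ew N ((a+k) %% N.+1)).
Proof.
move=> N3; elim: L a k => [|L IH] a k // hk.
have -> : edge_colours (ecol N) (arcf N a L.+1) =
   ecol N [set inord (a %% N.+1); inord (a.+1 %% N.+1)] :: edge_colours (ecol N) (arcf N a.+1 L).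
  by case: L {IH hk}.
case: k hk => [|k] hk /=.
- by rewrite addn0 modS ec_edge // ltn_pmod.
- rewrite IH; last lia. by rewrite addSnnS.
Qed.

Lemma total_arc_size N a L : size (total_colours (vcol N) (ecol N) (arcf N a L)) = L.*2.+1.
Proof.
elim: L a => [|L IH] a //=.
by case: L IH => [|L] IH //=; rewrite -[X in _ = X.+2](IH a.+1).
Qed.

Lemma total_arc N a L j : 3 <= N -> j <= L.*2 ->
  nth ord0 (total_colours (vcol N) (ecol N) (arcf N a L)) j = inord (Zt N (2*a + j)).
Proof.
move=> N3; elim: L a j => [|L IH] a j hj.
- have -> : j = 0 by lia. by rewrite /= addn0 ZtE0 /vcol inordK // ltn_pmod.
- have -> : total_colours (vcol N) (ecol N) (arcf N a L.+1) =
     vcol N (inord (a %% N.+1)) :: ecol N [set inord (a %% N.+1); inord (a.+1 %% N.+1)]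
       :: total_colours (vcol N) (ecol N) (arcf N a.+1 L).
    by case: L {IH hj}.
  case: j hj => [|[|j]] hj /=.
  + by rewrite addn0 ZtE0 /vcol inordK // ltn_pmod.
  + by rewrite modS ec_edge ?ltn_pmod // -[2*a+1]/(2*a+1) ZtE1.
  + rewrite IH; last lia. congr (inord (Zt N _)); lia.
Qed.

Lemma sqfree_sw_u : forall r m, 0 < m -> exists j, j < m /\ sw (r+j) <> sw (r+m+j).
Proof. exact: sw_sqfree. Qed.

Lemma arc_ok N a L : 3 <= N -> L <= N ->
  [/\ nonrepetitive (total_colours (vcol N) (ecol N) (arcf N a L)),
      nonrepetitive (map (vcol N) (arcf N a L)) &
      nonrepetitive (edge_colours (ecol N) (arcf N a L))].
Proof.
move=> N3 LN; split.
- apply: (@nonrep_nth _ _ ord0) => q m m0; rewrite total_arc_size => hq.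
  have [|j [jm hj]] := Zt_sqfree N3 (2*a + q) m0; first lia.
  exists j; split => //; rewrite !total_arc //; try lia.
  apply: inord_inj6; try exact: Zt_lt6.
  by rewrite !addnA.
- apply: (@nonrep_nth _ _ ord0) => q m m0; rewrite size_map arc_size => hq.
  have [|||j [jm hj]] := @cyc_sqfree (xw N) sw N.+1 erefl _ _ sw_sqfree (a + q) m m0.
  + by move=> k hk; rewrite /xw ifT.
  + move=> k hk; rewrite /xw /= ifF ?ifT //; last lia. rewrite /Xc; have := sw_lt3 k; lia.
  + lia.
  + exists j; split => //.
    rewrite !(nth_map ord0) ?arc_size; try lia.
    rewrite !arc_nth; try lia.
    rewrite /vcol !inordK ?ltn_pmod //.
    apply: inord_inj6; try exact: xw_lt6.
    by rewrite !addnA.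
- apply: (@nonrep_nth _ _ ord0) => q m m0; rewrite edge_arc_size => hq.
  have [|||j [jm hj]] := @cyc_sqfree (ew N) (fun i => 3 + sw i) N.+1 erefl _ _ sw3_sqfree (a + q) m m0.
  + by move=> k hk; rewrite /ew ifT.
  + move=> k hk; rewrite /ew /= ifF ?ifT //; last lia. rewrite /Yc; have := sw_lt3 0; lia.
  + exists j; split => //.
    rewrite !edge_arc //; try lia.
    apply: inord_inj6; try exact: ew_lt6.
    by rewrite !addnA.
Qed.

Lemma nonrep_rev (A : eqType) (s : seq A) : nonrepetitive s -> nonrepetitive (rev s).
Proof.
move=> H a r b rn e; apply: (H (rev b) (rev r) (rev a)).
  by move=> /(congr1 size); rewrite size_rev; case: r rn {e}.
by rewrite -(revK s) e !rev_cat !catA.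
Qed.

Lemma edge_rcons (T : finType) (C : Type) (ec : {set T} -> C) (t : seq T) z x :
  edge_colours ec (rcons (z :: t) x) = rcons (edge_colours ec (z :: t)) (ec [set last z t; x]).
Proof.
elim: t z => [|w t IH] z //.
transitivity (ec [set z; w] :: edge_colours ec (rcons (w :: t) x)); first by [].
by rewrite IH.
Qed.

Lemma total_rcons (T : finType) (C : Type) vc (ec : {set T} -> C) (t : seq T) z x :
  total_colours vc ec (rcons (z :: t) x) =
    total_colours vc ec (z :: t) ++ [:: ec [set last z t; x]; vc x].
Proof.
elim: t z => [|w t IH] z //.
transitivity (vc z :: ec [set z; w] :: total_colours vc ec (rcons (w :: t) x)); first by [].
by rewrite IH.
Qed.

Lemma rev_ne (T : Type) (y : T) s : exists z t, rev (y :: s) = z :: t /\ last z t = y.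
Proof.
case E: (rev (y :: s)) => [|z t]; first by move: (congr1 size E); rewrite size_rev.
exists z, t; split => //.
have : last z (z :: t) = y by rewrite -E rev_cons last_rcons.
by [].
Qed.

Lemma edge_rev (T : finType) (C : Type) (ec : {set T} -> C) (s : seq T) :
  edge_colours ec (rev s) = rev (edge_colours ec s).
Proof.
elim: s => [|x [|y s] IH] //.
have [z [t [E L]]] := rev_ne y s.
rewrite rev_cons E edge_rcons -E IH L.
have -> : edge_colours ec [:: x, y & s] = ec [set x; y] :: edge_colours ec (y :: s) by [].
by rewrite rev_cons setUC.
Qed.

Lemma total_rev (T : finType) (C : Type) vc (ec : {set T} -> C) (s : seq T) :
  total_colours vc ec (rev s) = rev (total_colours vc ec s).
Proof.
elim: s => [|x [|y s] IH] //.
have [z [t [E L]]] := rev_ne y s.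
rewrite rev_cons E total_rcons -E IH L.
have -> : total_colours vc ec [:: x, y & s] =
  vc x :: ec [set x; y] :: total_colours vc ec (y :: s) by [].
by rewrite !rev_cons -!cats1 -catA setUC.
Qed.

Lemma ord_inord N (x : 'I_N.+1) k : (x : nat) = k -> x = inord k.
Proof. move=> e; apply: val_inj; rewrite /= inordK; [exact: e | rewrite -e; exact: ltn_ord]. Qed.

Lemma path_arc N (p : seq 'I_N.+1) : p != [::] -> sorted (@cycle_adj N.+1) p -> uniq p ->
  exists a L, p = arcf N a L \/ p = rev (arcf N a L).
Proof.
elim: p => [|x p IH] // _.
case: p IH => [|y p] IH.
  move=> _ _; exists (val x), 0; left => /=.
  by rewrite modn_small // inord_val.
rewrite /= => /andP [adj sp] /andP [xn up].
have [a [L [E|E]]] := IH erefl sp up.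
- have hy : (y : nat) = a %% N.+1.
    have : nth y (y :: p) 0 = y by [].
    rewrite E arc_nth // addn0 => <-. by rewrite /= inordK // ltn_pmod.
  move: adj; rewrite /cycle_adj => /orP [/eqP e|/eqP e].
  + exists (val x), L.+1; left.
    rewrite [arcf N _ L.+1]/= E modn_small // inord_val.
    congr (_ :: _); apply: arc_mod; by rewrite -e.
  + case: L E => [|L] E.
    * exists (val y), 1; right.
      rewrite (_ : arcf N (val y) 1 = [:: y; x]); first by move: E; clear; case: p.
      rewrite /= modn_small // inord_val; congr [:: _; _]; apply/esym/ord_inord; by rewrite e.
    * exfalso; move: xn; rewrite E.
      have -> : x = inord ((a + 1) %% N.+1).
        apply: ord_inord; by rewrite e hy; symmetry; rewrite addn1 modS addn1.
      by rewrite (@arc_mem N a L.+1 1).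
- have hy : (y : nat) = (a + L) %% N.+1.
    have : nth y (y :: p) 0 = y by [].
    rewrite E nth_rev ?arc_size // arc_nth; last lia.
    have -> : L.+1 - 1 = L by lia. move=> <-. by rewrite /= inordK // ltn_pmod.
  move: adj; rewrite /cycle_adj => /orP [/eqP e|/eqP e].
  + case: L E hy => [|L] E hy.
    * exists (val x), 1; left.
      rewrite (_ : arcf N (val x) 1 = [:: x; y]); first by move: E; clear; case: p.
      rewrite /= modn_small // inord_val; congr [:: _; _]; apply/esym/ord_inord; by rewrite e.
    * exfalso; move: xn; rewrite E mem_rev.
      have -> : x = inord ((a + L) %% N.+1).
        apply: ord_inord.
        have : (val x + 1) %% N.+1 = ((a + L) %% N.+1 + 1) %% N.+1.
          by rewrite addn1 -e hy modnDml addnS addn1.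
        move/eqP; rewrite eqn_modDr => /eqP.
        by rewrite (modn_small (ltn_ord x)) modn_mod.
      by rewrite (@arc_mem N a L.+1 L).
  + exists a, L.+1; right.
    rewrite arc_rcons rev_rcons E. congr (_ :: _).
    apply: ord_inord; rewrite e hy; symmetry; by rewrite addnS modS addn1.
Qed.

Lemma ne_val k (x y : 'I_k) : x <> y -> (x : nat) <> y.
Proof. by move=> ne e; apply: ne; apply: val_inj. Qed.

Lemma upper N : 3 <= N -> total_thue_colourable (@cycle_adj N.+1) 6.
Proof.
move=> N3; exists (vcol N), (ecol N) => p /and3P [pn ps pu].
have [a [L E]] := path_arc pn ps pu.
have LN : L <= N.
  have /card_uniqP hs := pu; have := max_card (mem p).
  rewrite card_ord hs.
  by case: E => ->; rewrite ?size_rev arc_size.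
have [h1 h2 h3] := arc_ok a N3 LN.
case: E => ->; first by split.
rewrite total_rev map_rev edge_rev; split; exact: nonrep_rev.
Qed.

Lemma lower N k : 3 <= N -> k < 4 -> ~ total_thue_colourable (@cycle_adj N.+1) k.
Proof.
move=> N3 k4 [vc [ec H]].
pose v0 : 'I_N.+1 := inord 0. pose v1 : 'I_N.+1 := inord 1.
pose v2 : 'I_N.+1 := inord 2. pose v3 : 'I_N.+1 := inord 3.
have gp : is_graph_path (@cycle_adj N.+1) [:: v0; v1; v2; v3].
  have ad : forall i, i < 3 -> @cycle_adj N.+1 (inord i) (inord i.+1).
    move=> i hi; apply/orP; left; apply/eqP; rewrite !inordK ?modn_small //; lia.
  rewrite /is_graph_path /= (ad 0) // (ad 1) // (ad 2) //.
  rewrite /v0 /v1 /v2 /v3 !inE -!val_eqE /= !inordK; lia.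
have [Ht0 Hv0 He0] := H _ gp.
set A0 := vc v0; set A1 := vc v1; set A2 := vc v2;
set A3 := vc v3; set B0 := ec [set v0; v1];
set B1 := ec [set v1; v2]; set B2 := ec [set v2; v3].
have Ht : nonrepetitive [:: A0; B0; A1; B1; A2; B2; A3] := Ht0.
have Hv : nonrepetitive [:: A0; A1; A2; A3] := Hv0.
have He : nonrepetitive [:: B0; B1; B2] := He0.
clear Ht0 Hv0 He0.
have n1 : A0 <> B0 by move=> e; apply: (Ht [::] [:: A0] [:: A1; B1; A2; B2; A3]); rewrite ?e.
have n2 : B0 <> A1 by move=> e; apply: (Ht [:: A0] [:: B0] [:: B1; A2; B2; A3]); rewrite ?e.
have n3 : A1 <> B1 by move=> e; apply: (Ht [:: A0; B0] [:: A1] [:: A2; B2; A3]); rewrite ?e.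
have n4 : B1 <> A2 by move=> e; apply: (Ht [:: A0; B0; A1] [:: B1] [:: B2; A3]); rewrite ?e.
have n5 : A2 <> B2 by move=> e; apply: (Ht [:: A0; B0; A1; B1] [:: A2] [:: A3]); rewrite ?e.
have n6 : A0 <> A1 by move=> e; apply: (Hv [::] [:: A0] [:: A2; A3]); rewrite ?e.
have n7 : A1 <> A2 by move=> e; apply: (Hv [:: A0] [:: A1] [:: A3]); rewrite ?e.
have n8 : B0 <> B1 by move=> e; apply: (He [::] [:: B0] [:: B2]); rewrite ?e.
have n9 : B1 <> B2 by move=> e; apply: (He [:: B0] [:: B1] [::]); rewrite ?e.
have n10 : ~ [/\ A0 = B1, B0 = A2 & A1 = B2].
  by case=> e1 e2 e3; apply: (Ht [::] [:: A0; B0; A1] [:: A3]); rewrite ?e1 ?e2 ?e3.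
have l0 := ltn_ord A0; have l1 := ltn_ord A1; have l2 := ltn_ord A2.
have l3 := ltn_ord B0; have l4 := ltn_ord B1; have l5 := ltn_ord B2.
move/ne_val: n1 => n1; move/ne_val: n2 => n2; move/ne_val: n3 => n3.
move/ne_val: n4 => n4; move/ne_val: n5 => n5; move/ne_val: n6 => n6.
move/ne_val: n7 => n7; move/ne_val: n8 => n8; move/ne_val: n9 => n9.
apply: n10; split; apply: val_inj => /=; lia.
Qed.

Theorem corollary16 (n : nat) (hn : 4 <= n) :
  (forall k : nat, k < 4 -> ~ total_thue_colourable (@cycle_adj n) k) /\
  total_thue_colourable (@cycle_adj n) 6.
Proof.
case: n hn => [|N] // hn.
split; [move=> k k4; apply: lower => //; lia | apply: upper; lia].
Qed.
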